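(* Let $X$ be a compact metric space and $(f_n)_{n\ge1}$ a sequence of continuous maps $X\to X$ converging uniformly to a function $\phi\colon X\to X$. Then $\phi\circ f_1^p=f_1^{p+1}$ for every $p\in\mathbb{N}^*$.
   Context: $\mathbb{N}=\{1,2,\dots\}$, $\mathbb{N}^*$ the free ultrafilters on $\mathbb{N}$. For $p\in\mathbb{N}^*$, $p\text{-}\lim_n x_n$ is the unique $y$ with $\{n:x_n\in V\}\in p$ for all neighbourhoods $V$ of $y$. $f_1^n=f_n\circ\cdots\circ f_1$, and $f_1^p(x)=p\text{-}\lim_n f_1^n(x)$ for $p\in\mathbb{N}^*$. $p+1$ is the ultrafilter $\{A\subseteq\mathbb{N}:\{m: m+1\in A\}\in p\}$. *)

(* Defs.v *)
From HB Require Import structures.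
From mathcomp Require Import all_boot all_order all_algebra.
From mathcomp Require Import all_classical all_reals all_analysis.
Set Implicit Arguments. Unset Strict Implicit. Unset Printing Implicit Defensive.
Import Order.TTheory GRing.Theory Num.Theory.
Local Open Scope classical_set_scope.

(* Naturals {1,2,...} are represented by Coq's nat; index 0 is unused for the
   maps (f 0 plays no role).  A free ultrafilter on nat: an ultrafilter whose
   members have empty intersection.  (Such a p contains no finite set, in
   particular not {0}, so it is the same as a free ultrafilter on {1,2,...}.) *)
Definition free_ultrafilter (p : set_system nat) : Prop :=
  UltraFilter p /\ \bigcap_(A in p) A = set0.

Definition uf_succ (p : set_system nat) : set_system nat :=
  [set A | p [set m | A m.+1]].

Fixpoint fcomp {X : Type} (f : nat -> X -> X) (n : nat) : X -> X :=
  match n with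
  | 0 => id
  | k.+1 => fun x => f k.+1 (fcomp f k x)
  end.

(* p-lim_n u_n : the (unique, in a Hausdorff space) y such that u @ p --> y;
   u 0 is an arbitrary default used only if no limit exists. *)
Definition plim {X : topologicalType} (p : set_system nat) (u : nat -> X) : X :=
  xget (u 0) [set y | (u @ p) --> y].

Definition fcomp_uf {X : topologicalType} (f : nat -> X -> X)
  (p : set_system nat) (x : X) : X :=
  plim p (fun n => fcomp f n x).

(* Main.v *)
Require Import Defs.
From HB Require Import structures.
From mathcomp Require Import all_boot all_order all_algebra.
From mathcomp Require Import all_classical all_reals all_analysis.
Import Order.TTheory GRing.Theory Num.Theory.
Local Open Scope classical_set_scope.

Section S.
Context (R : realType) (X : metricType R).

Lemma ultra_union (p : set_system nat) (A B : set nat) :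
  UltraFilter p -> p (A `|` B) -> p A \/ p B.
Proof.
move=> Up pAB.
have [|nA] := in_ultra_setVsetC A Up; first by left.
have [|nB] := in_ultra_setVsetC B Up; first by right.
exfalso; have : p ((A `|` B) `&` (~` A `&` ~` B)) by apply: filterI => //; exact: filterI.
by move/filter_ex => [m [[Am|Bm] [nAm nBm]]].
Qed.

Lemma free_lt (p : set_system nat) N : free_ultrafilter p -> ~ p [set m | (m < N)%N].
Proof.
move=> [Up Fp]; elim: N => [|N IH].
  by move/filter_ex => [].
have -> : [set m | (m < N.+1)%N] = [set m | (m < N)%N] `|` [set N].
  apply/seteqP; split => m /=.
    by rewrite ltnS leq_eqVlt => /orP [/eqP ->|]; [right|left].
  by case => [/ltnW //|->].
move/(@ultra_union _ _ _ Up) => [//|pN].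
have : (\bigcap_(A in p) A) N.
  move=> A pA; have /filter_ex [m [Am /= <-]] : p (A `&` [set N]) by exact: filterI.
  done.
by rewrite Fp.
Qed.

Lemma free_ge (p : set_system nat) N : free_ultrafilter p -> p [set m | (N <= m)%N].
Proof.
move=> fp; have Up := fp.1; have [|] := in_ultra_setVsetC [set m | (N <= m)%N] Up => // H.
exfalso; apply: (@free_lt p N fp); apply: filterS H => m /=; rewrite ltnNge => /negP //.
Qed.

Lemma plim_cvg (p : set_system nat) (u : nat -> X) :
  compact [set: X] -> UltraFilter p -> u @ p --> plim p u.
Proof.
move=> cX Up.
have [y [_ cy]] : [set: X] `&` cluster (u @ p) !=set0.
  by apply: cX; exact: filterT.
have uy : u @ p --> y.
  move=> V Vy; have [//|] := in_ultra_setVsetC (u @^-1` V) Up => nV.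
  exfalso; have [z [/= nz Vz]] := cy (~` V) V nV Vy.
  by apply: nz.
rewrite /plim; case: xgetP => [z -> //|H]; exfalso; exact: (H y).
Qed.

End S.

Theorem theorem3p5 (R : realType) (X : metricType R)
  (f : nat -> X -> X) (phi : X -> X) :
  compact [set: X] ->
  (forall n, (0 < n)%N -> continuous (f n)) ->
  {uniform, f @ \oo --> phi} ->
  forall p : set_system nat, free_ultrafilter p ->
  phi \o fcomp_uf f p = fcomp_uf f (uf_succ p).
Proof.
move=> cX fc fphi p fp; have Up := fp.1; have Pp : ProperFilter p := @ultra_proper _ p Up; have Fp : Filter p by apply: Pp.
have PF : ProperFilter (uf_succ p).
  have -> : uf_succ p = succn @ p by [].
  exact: fmap_proper_filter.
have phic : continuous phi.
  apply: (@uniform_limit_continuous _ _ (f @ \oo)) => //.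
  exists 1%N => // n /= n1; exact: fc.
apply/funext => x /=; rewrite /fcomp_uf.
set g := fun n => fcomp f n x.
have gy := @plim_cvg R X p g cX Up.
set y := plim p g in gy *.
have key : g @ uf_succ p --> phi y.
  apply/cvg_ballP => e e0.
  have e20 : (0 < e / 2)%R by rewrite divr_gt0.
  have h1 : p [set m | ball (phi y) (e/2)%R (phi (g m))].
    by apply: (@cvg_ball _ _ _ _ Fp (phi \o g) (phi y) (cvg_comp _ _ gy (phic y))).
  have h2 : \forall n \near \oo, forall z, ball (phi z) (e/2)%R (f n z).
    suff : (f @ \oo) [set h | forall z, ball (phi z) (e/2)%R (h z)] by [].
    apply: fphi; apply/uniform_nbhs.
    exists [set xy | ball xy.1 (e/2)%R xy.2]; split.
      by rewrite -entourage_from_ballE; exists (e/2)%R.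
    by move=> h /= H z; exact: H.
  case: h2 => N _ HN.
  change (p [set m | ball (phi y) e (g m.+1)]).
  have h3 := @filterI _ p Fp _ _ h1 (@free_ge p N fp).
  apply: (@filterS _ p Fp _ _ _ h3) => m [/= b1 Nm].
  rewrite [e]splitr; apply: ball_triangle b1 _.
  by apply: HN => /=; exact: leqW.
have Hz := @xgetI X (g 0%N) [set z | g @ uf_succ p --> z] (phi y) key.
have := cvg_unique (@metric_hausdorff R X) key Hz. by apply; apply: fmap_proper_filter.
Qed.
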